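(* For every positive integer $n$, the function $\tilde B_n(h)$ is strictly increasing on $(0,d_n)$, i.e. $\tilde B_n'(h)>0$ for all $h\in(0,d_n)$, and $\lim_{h\to0}\tilde B_n(h)=0$.
   Context: Let $n$ be a positive integer, $d_n=\frac{n(n+1)^{2/n}}{2(n+2)}$, $W(u)=\frac{u^2}{2}-\frac{u^{n+2}}{(n+1)(n+2)}$ and $H(u,v)=\frac{v^2}{2}+W(u)$, the Hamiltonian of the system $u'=v$, $v'=-u+\frac{1}{n+1}u^{n+1}$. For $h\in(0,d_n)$ let $\Gamma_h$ be the periodic orbit of this system contained in $\{H=h\}$ surrounding the center $(0,0)$, oriented clockwise. Define $B_n(h)=\oint_{\Gamma_h}u^n v\,du$, $B_0(h)=\oint_{\Gamma_h}v\,du$ and $\tilde B_n(h)=B_n(h)/B_0(h)$. *)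

(* Defs.v *)
From Stdlib Require Import Reals.
From Coquelicot Require Import Coquelicot.
Open Scope R_scope.

Definition d_n (n : nat) : R :=
  INR n * Rpower (INR n + 1) (2 / INR n) / (2 * (INR n + 2)).

Definition W (n : nat) (u : R) : R :=
  u ^ 2 / 2 - u ^ (n + 2) / ((INR n + 1) * (INR n + 2)).

Definition H (n : nat) (u v : R) : R := v ^ 2 / 2 + W n u.

(* c_n = (n+1)^(1/n): the nonzero critical points of W are at u = c_n
   (and u = -c_n when n is even); W(+-c_n) = d_n. *)
Definition c_n (n : nat) : R := Rpower (INR n + 1) (1 / INR n).

(* For h in (0,d_n), the oval Gamma_h is {H = h} /\ {-c_n < u < c_n}; its
   projection to the u-axis is the interval {u in (-c_n,c_n) | W u <= h}
   = [u_-(h), u_+(h)], and on it v = +- sqrt(2(h - W u)).  With clockwise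
   orientation (upper branch v>0 traversed left-to-right, lower branch v<0
   right-to-left), the line integral is
     oint_{Gamma_h} u^k v du = 2 * int_{u_-}^{u_+} u^k sqrt(2(h - W u)) du. *)
Definition oval_integrand (n k : nat) (h u : R) : R :=
  if Rlt_dec (W n u) h then u ^ k * sqrt (2 * (h - W n u)) else 0.

Definition oval_int (n k : nat) (h : R) : R :=
  2 * RInt (oval_integrand n k h) (- c_n n) (c_n n).

Definition B (n : nat) (h : R) : R := oval_int n n h.
Definition B0 (n : nat) (h : R) : R := oval_int n 0 h.
Definition Btilde (n : nat) (h : R) : R := B n h / B0 n h.

(* Main.v *)
Require Import Defs.
From Stdlib Require Import Reals Lra Lia ClassicalEpsilon Ranalysis5.
From Coquelicot Require Import Coquelicot.
Open Scope R_scope.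

Section S.
Variable n : nat.
Hypothesis Hn : (0 < n)%nat.

Let N := INR n.
Lemma N_pos : 0 < N.
Proof. unfold N; apply lt_0_INR; lia. Qed.
Lemma N_ge1 : 1 <= N.
Proof. unfold N; apply (le_INR 1); lia. Qed.

Definition kap := 2 / ((N + 1) * (N + 2)).
Definition pp (y : R) := y ^ n * (1 - y ^ 2).
Definition dpp (y : R) := N * y ^ (pred n) - (N + 2) * y ^ (S n).
Definition ys := sqrt (N / (N + 2)).
Definition ss := pp ys.
Definition AA (y : R) := (N + 2) * y ^ 2 - N.

Lemma pow_pred_S (y : R) : y ^ n = y * y ^ (pred n).
Proof. destruct n as [|m]; [lia|]. simpl. reflexivity. Qed.

Lemma kap_pos : 0 < kap.
Proof. unfold kap; pose proof N_pos; apply Rdiv_lt_0_compat; nra. Qed.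

Lemma ys_sq : ys ^ 2 = N / (N + 2).
Proof. unfold ys. simpl. rewrite Rmult_1_r. apply sqrt_sqrt.
  pose proof N_pos. apply Rlt_le, Rdiv_lt_0_compat; lra. Qed.

Lemma ys_pos : 0 < ys.
Proof. unfold ys. apply sqrt_lt_R0. pose proof N_pos. apply Rdiv_lt_0_compat; lra. Qed.

Lemma ys_lt1 : ys < 1.
Proof. pose proof ys_pos. pose proof ys_sq. pose proof N_pos.
  assert (N / (N+2) < 1) by (apply (Rmult_lt_reg_r (N+2)); [lra|]; unfold Rdiv; rewrite Rmult_assoc, Rinv_l; lra).
  assert (ys * ys < 1) by (simpl in *; lra). nra. Qed.

Lemma is_derive_pp y : is_derive pp y (dpp y).
Proof.
  unfold pp, dpp. auto_derive; auto.
  replace (S n) with (S (S (pred n))) by lia. rewrite (pow_pred_S y). unfold N. simpl. ring.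
Qed.

Lemma dpp_eq y : dpp y = - y ^ (pred n) * AA y.
Proof. unfold dpp, AA. replace (S n) with (S (S (pred n))) by lia. simpl. ring. Qed.

Lemma AA_pos y : ys < y -> 0 < AA y.
Proof. intros H. pose proof ys_pos. pose proof ys_sq. pose proof N_pos. unfold AA.
  assert (ys ^ 2 < y ^ 2) by (simpl; nra).
  assert (N = (N+2) * ys^2) by (rewrite ys_sq; field; lra). nra. Qed.

Lemma dpp_neg y : ys < y -> dpp y < 0.
Proof. intros H. rewrite dpp_eq. pose proof (AA_pos y H). pose proof ys_pos.
  assert (0 < y ^ pred n) by (apply pow_lt; lra). nra. Qed.

Lemma pp_decr a b : ys <= a -> a < b -> pp b < pp a.
Proof.
  intros Ha Hab.
  destruct (MVT_cor2 pp dpp a b Hab) as [c [Hm Hc]].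
  - intros x _. apply is_derive_Reals, is_derive_pp.
  - assert (dpp c < 0) by (apply dpp_neg; lra). nra.
Qed.

Lemma pp_cont y : continuity_pt pp y.
Proof. apply continuity_pt_filterlim. apply (ex_derive_continuous pp). eexists; apply is_derive_pp. Qed.

Lemma pp_inj a b : ys <= a -> ys <= b -> pp a = pp b -> a = b.
Proof. intros Ha Hb E. destruct (Rtotal_order a b) as [H|[H|H]]; auto.
  - pose proof (pp_decr a b Ha H). lra.
  - pose proof (pp_decr b a Hb H). lra. Qed.

Lemma ss_pos : 0 < ss /\ ss < 1.
Proof. unfold ss, pp. pose proof ys_pos. pose proof ys_lt1.
  assert (0 < ys ^ n) by (apply pow_lt; lra).
  assert (ys ^ n <= 1) by (rewrite <- (pow1 n); apply pow_incr; lra).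
  assert (0 < ys^2 < 1) by (simpl; split; nra). nra. Qed.

Lemma pp2 : pp 2 < - 1.
Proof. unfold pp. assert (1 <= 2 ^ n) by (rewrite <- (pow1 n); apply pow_incr; lra). simpl. nra. Qed.

Definition Yf (s : R) : R := epsilon (inhabits 0) (fun y => ys <= y <= 2 /\ pp y = s).

Lemma Y_spec s : pp 2 <= s <= ss -> ys <= Yf s <= 2 /\ pp (Yf s) = s.
Proof.
  intros Hs. unfold Yf. apply epsilon_spec.
  assert (Hc : continuity pp) by (intro; apply pp_cont).
  assert (pp 2 < pp ys) by (apply pp_decr; pose proof ys_lt1; lra).
  destruct (IVT_gen pp ys 2 s Hc) as [y [Hy E]].
  - rewrite Rmin_right, Rmax_left by lra. unfold ss in Hs. lra.
  - exists y. rewrite Rmin_left, Rmax_right in Hy by (pose proof ys_lt1; lra). auto.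
Qed.

Lemma Y_uniq s y : ys <= y <= 2 -> pp y = s -> Yf s = y.
Proof. intros Hy E. pose proof (pp2). pose proof ys_lt1.
  assert (pp 2 <= s <= ss).
  { subst s. unfold ss. split.
    - destruct (Req_dec y 2); [subst; lra|]. left; apply pp_decr; lra.
    - destruct (Req_dec y ys); [subst; lra|]. left; apply pp_decr; lra. }
  destruct (Y_spec s H1) as [H3 H4]. apply pp_inj; lra. Qed.

Lemma Y_gt s : pp 2 <= s < ss -> ys < Yf s.
Proof. intros Hs. destruct (Y_spec s) as [H1 H2]; [lra|].
  destruct H1 as [[H1|H1] _]; auto. rewrite <- H1 in H2. unfold ss in Hs. lra. Qed.

Lemma pp1 : pp 1 = 0.
Proof. unfold pp. simpl. ring. Qed.

Lemma Y0 : Yf 0 = 1.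
Proof. apply Y_uniq. pose proof ys_lt1; lra. apply pp1. Qed.

Lemma Y_lt1 s : 0 < s <= ss -> Yf s < 1.
Proof. intros Hs. pose proof pp2. destruct (Y_spec s) as [H1 H2]; [lra|].
  destruct (Rlt_or_le (Yf s) 1) as [K|K]; auto.
  destruct K as [K|K]. pose proof (pp_decr 1 (Yf s) ltac:(pose proof ys_lt1; lra) K) as Q. rewrite pp1 in Q. lra.
  rewrite <- K, pp1 in H2. lra. Qed.

Lemma Y_gt1 s : pp 2 <= s < 0 -> 1 < Yf s.
Proof. intros Hs. pose proof ss_pos. destruct (Y_spec s) as [H1 H2]; [lra|].
  destruct (Rlt_or_le 1 (Yf s)) as [K|K]; auto.
  destruct K as [K|K]. pose proof (pp_decr (Yf s) 1 ltac:(lra) K) as Q. rewrite pp1 in Q. lra.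
  rewrite K, pp1 in H2. lra. Qed.

Lemma Y_pos s : pp 2 <= s <= ss -> 0 < Yf s.
Proof. intros. pose proof ys_pos. destruct (Y_spec s H); lra. Qed.

Lemma Y_deriv s : pp 2 < s < ss -> is_derive Yf s (1 / dpp (Yf s)).
Proof.
  intros Hs. pose proof ys_lt1. pose proof ss_pos. pose proof pp2.
  set (f := fun y => - pp y). set (g := fun t => Yf (- t)).
  assert (Hfg : forall x, - ss <= x <= - pp 2 -> comp f g x = id x).
  { intros x Hx. unfold comp, f, g, id. destruct (Y_spec (-x)) as [_ E]; [lra|]. rewrite E. ring. }
  assert (Hgc : continuity_pt g (- s)).
  { apply (continuity_pt_recip_interv f g ys 2); try lra.
    - intros x y Hx Hxy Hy. unfold f. pose proof (pp_decr x y Hx Hxy). lra.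
    - intros x Hx Hx'. apply Hfg. unfold f in Hx, Hx'. fold ss in Hx. lra.
    - intros x Hx Hx'. unfold g. unfold f in Hx, Hx'. fold ss in Hx. destruct (Y_spec (-x)); lra.
    - intros a _. unfold f. apply continuity_pt_opp, pp_cont.
    - unfold f. fold ss. lra. }
  assert (Prf : forall a, g (- ss) <= a <= g (- pp 2) -> derivable_pt f a).
  { intros a _. exists (- dpp a). apply is_derive_Reals. unfold f.
    apply (is_derive_opp pp a (dpp a)), is_derive_pp. }
  assert (Hgi : g (- ss) <= g (- s) <= g (- pp 2)).
  { unfold g. rewrite !Ropp_involutive.
    rewrite (Y_uniq ss ys), (Y_uniq (pp 2) 2); try lra; auto.
    destruct (Y_spec s); lra. }
  assert (Hd : derive_pt f (g (- s)) (Prf (g (- s)) Hgi) = - dpp (Yf s)).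
  { apply derive_pt_eq_0. unfold g. rewrite Ropp_involutive. apply is_derive_Reals.
    apply (is_derive_opp pp _ (dpp (Yf s))), is_derive_pp. }
  pose proof (derivable_pt_lim_recip_interv f g (- ss) (- pp 2) (- s) Prf Hgc
    ltac:(lra) ltac:(lra) Hgi Hfg) as HH.
  rewrite Hd in HH.
  assert (dpp (Yf s) < 0) by (apply dpp_neg, Y_gt; lra).
  specialize (HH ltac:(lra)).
  apply is_derive_Reals in HH.
  assert (E : forall t, Yf t = g (- t)) by (intro; unfold g; rewrite Ropp_involutive; auto).
  apply (is_derive_ext (fun t => g (- t))). { intro; symmetry; apply E. }
  replace (1 / dpp (Yf s)) with ((-1) * (1 / - dpp (Yf s))) by (field; lra).
  apply (is_derive_comp g (fun t => - t) s). 
  exact HH. auto_derive; auto; ring.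
Qed.

Lemma pow_lt_strict a b : 0 <= a < b -> a ^ n < b ^ n.
Proof. intros [Ha Hab]. destruct n as [|k]; [lia|]. simpl.
  assert (a ^ k <= b ^ k) by (apply pow_incr; lra).
  assert (0 < b ^ k) by (apply pow_lt; lra).
  assert (0 <= a ^ k) by (apply pow_le; lra). nra. Qed.

Definition Cn := c_n n.
Definition RR := Cn * ys.

Lemma Cn_pos : 0 < Cn.
Proof. unfold Cn, c_n. apply exp_pos. Qed.

Lemma Cn_pow : Cn ^ n = N + 1.
Proof. unfold Cn, c_n. pose proof N_pos. rewrite <- Rpower_pow by apply exp_pos.
  rewrite Rpower_mult. fold N. replace (1 / N * N) with 1 by (field; lra).
  apply Rpower_1; lra. Qed.

Lemma d_eq : d_n n = N * Cn ^ 2 / (2 * (N + 2)).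
Proof. unfold d_n, Cn, c_n. pose proof N_pos. fold N.
  rewrite <- Rpower_pow by apply exp_pos. rewrite Rpower_mult.
  replace (1 / N * INR 2) with (2 / N) by (simpl; field; lra). reflexivity. Qed.

Lemma RR_pos : 0 < RR.
Proof. unfold RR. pose proof Cn_pos; pose proof ys_pos. nra. Qed.

Lemma RR_sq : RR ^ 2 = 2 * d_n n.
Proof. rewrite d_eq. unfold RR. rewrite Rpow_mult_distr, ys_sq. pose proof N_pos. field. lra. Qed.

Lemma kap_RR : kap * RR ^ n = ss.
Proof. unfold RR, ss, pp. rewrite Rpow_mult_distr, Cn_pow, ys_sq. unfold kap.
  pose proof N_pos. field. lra. Qed.

Lemma dom x : Rabs x < RR -> - ss < kap * x ^ n < ss.
Proof. intros H. pose proof kap_pos.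
  assert (Rabs x ^ n < RR ^ n) by (apply pow_lt_strict; split; [apply Rabs_pos| auto]).
  rewrite RPow_abs in H1. rewrite <- kap_RR.
  apply Rabs_def2 in H1. destruct H1. split; nra. Qed.

Lemma dom2 x : Rabs x < RR -> pp 2 < kap * x ^ n < ss.
Proof. intros H. pose proof (dom x H). pose proof pp2. pose proof ss_pos. lra. Qed.

Definition Yd s := 1 / dpp (Yf s).
Definition Phi s := 2 * Yf s / AA (Yf s).
Definition dPhiY y := -2 * ((N + 2) * y ^ 2 + N) / (AA y) ^ 2.
Definition Phid s := dPhiY (Yf s) * Yd s.
Definition sig r t := kap * (r * sin t) ^ n.
Definition dsig r t := kap * (N * (r * sin t) ^ (pred n) * sin t).

Definition Dom s := pp 2 < s < ss.

Lemma cont_of_derive f x l : is_derive f x l -> continuity_pt f x.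
Proof. intros H. apply continuity_pt_filterlim. apply (ex_derive_continuous f). eexists; eauto. Qed.

Lemma Yf_cont s : Dom s -> continuity_pt Yf s.
Proof. intros H. eapply cont_of_derive, Y_deriv, H. Qed.

Lemma Yf_gt s : Dom s -> ys < Yf s.
Proof. intros H. apply Y_gt. unfold Dom in H. lra. Qed.

Lemma AA_Yf_pos s : Dom s -> 0 < AA (Yf s).
Proof. intros H. apply AA_pos, Yf_gt, H. Qed.

Lemma dpp_cont y : continuity_pt dpp y.
Proof. eapply cont_of_derive. unfold dpp. auto_derive. auto. reflexivity. Qed.

Lemma AA_cont y : continuity_pt AA y.
Proof. eapply cont_of_derive. unfold AA. auto_derive. auto. reflexivity. Qed.

Lemma Yd_cont s : Dom s -> continuity_pt Yd s.
Proof. intros H. unfold Yd. apply continuity_pt_div.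
  apply continuity_pt_const; intros ??; reflexivity.
  apply (continuity_pt_comp Yf dpp). apply Yf_cont, H. apply dpp_cont.
  pose proof (dpp_neg (Yf s) (Yf_gt s H)). unfold comp. lra. Qed.

Lemma Phi_deriv s : Dom s -> is_derive Phi s (Phid s).
Proof. intros H. unfold Phi, Phid.
  pose proof (AA_Yf_pos s H). rewrite Rmult_comm.
  apply (is_derive_comp (fun y => 2 * y / AA y) Yf s).
  - unfold AA, dPhiY. auto_derive. unfold AA in H0. lra.
    unfold AA. field. unfold AA in H0. lra.
  - apply Y_deriv, H.
Qed.

Lemma Phi_cont s : Dom s -> continuity_pt Phi s.
Proof. intros H. eapply cont_of_derive, Phi_deriv, H. Qed.

Lemma Phid_cont s : Dom s -> continuity_pt Phid s.
Proof. intros H. unfold Phid. apply continuity_pt_mult; [|apply Yd_cont, H].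
  apply (continuity_pt_comp Yf dPhiY). apply Yf_cont, H.
  pose proof (AA_Yf_pos s H). unfold dPhiY.
  eapply cont_of_derive. unfold AA in *. auto_derive. simpl in H0. apply Rmult_integral_contrapositive; split; nra. reflexivity.
Qed.

Lemma abs_rsin r t : Rabs r < RR -> Rabs (r * sin t) < RR.
Proof. intros H. rewrite Rabs_mult. pose proof (Rabs_pos r). pose proof (SIN_bound t).
  assert (Rabs (sin t) <= 1) by (apply Rabs_le; lra).
  pose proof (Rabs_pos (sin t)). nra. Qed.

Lemma sig_dom r t : Rabs r < RR -> Dom (sig r t).
Proof. intros H. unfold Dom, sig. apply dom2, abs_rsin, H. Qed.

Lemma sig_deriv r t : is_derive (fun r => sig r t) r (dsig r t).
Proof. unfold sig, dsig. auto_derive. auto. unfold N. ring. Qed.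

Lemma comp_sig_deriv (F dF : R -> R) r t :
  Rabs r < RR -> (forall s, Dom s -> is_derive F s (dF s)) ->
  is_derive (fun r => cos t ^ 2 * F (sig r t)) r (cos t ^ 2 * (dF (sig r t) * dsig r t)).
Proof. intros H HF. rewrite (Rmult_comm (dF _)).
  apply (is_derive_scal (fun r => F (sig r t))).
  apply (is_derive_comp F (fun r => sig r t)). apply HF, sig_dom, H. apply sig_deriv.
Qed.

Lemma cont2_1 f x y : continuity_2d_pt f x y -> continuous (fun v => f x v) y.
Proof. intros H. apply continuity_pt_filterlim. intros eps Heps.
  destruct (H (mkposreal eps Heps)) as [d Hd]. exists d. split. apply cond_pos.
  intros v [_ Hv]. unfold R_dist in *. simpl. apply Hd. rewrite Rminus_eq_0, Rabs_R0. apply cond_pos. exact Hv. Qed.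

Lemma cont_pt_poly (f : R -> R) x : (forall y, ex_derive f y) -> continuity_pt f x.
Proof. intros H. destruct (H x) as [l Hl]. eapply cont_of_derive; eauto. Qed.

Lemma cont2_sin r t : continuity_2d_pt (fun _ v => sin v) r t.
Proof. apply (continuity_1d_2d_pt_comp sin (fun _ v => v)). apply continuity_sin. apply continuity_2d_pt_id2. Qed.

Lemma cont2_sig r t : continuity_2d_pt sig r t.
Proof. unfold sig. apply (continuity_1d_2d_pt_comp (fun z => kap * z ^ n) (fun u v => u * sin v)).
  apply cont_pt_poly. intro; auto_derive; auto.
  apply continuity_2d_pt_mult. apply continuity_2d_pt_id1. apply cont2_sin. Qed.

Lemma cont2_dsig r t : continuity_2d_pt dsig r t.
Proof. unfold dsig. apply (continuity_2d_pt_mult (fun _ _ => kap)). apply continuity_2d_pt_const.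
  apply continuity_2d_pt_mult; [|apply cont2_sin].
  apply (continuity_2d_pt_mult (fun _ _ => N)). apply continuity_2d_pt_const.
  apply (continuity_1d_2d_pt_comp (fun z => z ^ pred n) (fun u v => u * sin v)).
  apply cont_pt_poly. intro; auto_derive; auto.
  apply continuity_2d_pt_mult. apply continuity_2d_pt_id1. apply cont2_sin. Qed.

Lemma cont2_cos2 r t : continuity_2d_pt (fun _ v => cos v ^ 2) r t.
Proof. apply (continuity_1d_2d_pt_comp (fun z => cos z ^ 2) (fun _ v => v)).
  apply cont_pt_poly. intro; auto_derive; auto. apply continuity_2d_pt_id2. Qed.

Lemma cont2_F (F : R -> R) r t : Rabs r < RR -> (forall s, Dom s -> continuity_pt F s) ->
  continuity_2d_pt (fun u v => cos v ^ 2 * F (sig u v)) r t.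
Proof. intros Hr HF. apply continuity_2d_pt_mult. apply cont2_cos2.
  apply (continuity_1d_2d_pt_comp F sig). apply HF, sig_dom, Hr. apply cont2_sig. Qed.

Lemma cont2_dF (F : R -> R) r t : Rabs r < RR -> (forall s, Dom s -> continuity_pt F s) ->
  continuity_2d_pt (fun u v => cos v ^ 2 * (F (sig u v) * dsig u v)) r t.
Proof. intros Hr HF. apply continuity_2d_pt_mult. apply cont2_cos2.
  apply continuity_2d_pt_mult; [|apply cont2_dsig].
  apply (continuity_1d_2d_pt_comp F sig). apply HF, sig_dom, Hr. apply cont2_sig. Qed.

Lemma ball_abs (r y : R) (e : posreal) : Rabs r + e <= RR -> ball r e y -> Rabs y < RR.
Proof. intros H1 H2. change (Rabs (y - r) < e) in H2.
  pose proof (Rabs_triang_inv y r). pose proof (Rabs_triang (y - r) r).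
  replace (y - r + r) with y in H0 by ring. lra. Qed.

Definition pos_margin r (Hr : Rabs r < RR) : posreal.
Proof. exists (RR - Rabs r). lra. Defined.

Lemma param_deriv (F dF : R -> R) a b r :
  (forall s, Dom s -> is_derive F s (dF s)) -> (forall s, Dom s -> continuity_pt dF s) ->
  Rabs r < RR ->
  is_derive (fun r => RInt (fun t => cos t ^ 2 * F (sig r t)) a b) r
    (RInt (fun t => cos t ^ 2 * (dF (sig r t) * dsig r t)) a b).
Proof.
  intros HF HdF Hr.
  assert (HFc : forall s, Dom s -> continuity_pt F s) by (intros; eapply cont_of_derive; eauto).
  set (e := pos_margin r Hr).
  assert (Hloc : forall y, ball r e y -> Rabs y < RR).
  { intros y Hy. apply (ball_abs r y e). simpl. lra. auto. }
  assert (HD : forall u v, Rabs u < RR -> Derive (fun z => cos v ^ 2 * F (sig z v)) u = cos v ^ 2 * (dF (sig u v) * dsig u v)).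
  { intros u v Hu. apply is_derive_unique. apply comp_sig_deriv; auto. }
  assert (E : RInt (fun t => cos t ^ 2 * (dF (sig r t) * dsig r t)) a b =
      RInt (fun t => Derive (fun u => cos t ^ 2 * F (sig u t)) r) a b).
  { apply RInt_ext. intros x _. rewrite HD; auto. }
  rewrite E. clear E.
  apply (is_derive_RInt_param (fun u t => cos t ^ 2 * F (sig u t))).
  - exists e. intros y Hy t _. eexists. apply comp_sig_deriv; auto.
  - intros t _. apply (continuity_2d_pt_ext_loc (fun u v => cos v ^ 2 * (dF (sig u v) * dsig u v))).
    + exists e. intros u v Hu _. rewrite HD; [reflexivity|]. apply (Hloc u). exact Hu.
    + apply cont2_dF; auto.
  - exists e. intros y Hy. apply (ex_RInt_continuous (V := R_CompleteNormedModule)). intros z _.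
    apply (cont2_1 (fun u v => cos v ^ 2 * F (sig u v))). apply cont2_F; auto.
Qed.

Lemma Yf_ex_derive s : Dom s -> ex_derive Yf s.
Proof. intros H. eexists. apply Y_deriv, H. Qed.

Lemma Derive_Yf s : Dom s -> Derive Yf s = 1 / dpp (Yf s).
Proof. intros H. apply is_derive_unique, Y_deriv, H. Qed.

Lemma pp_Yf_sig r t : Rabs r < RR -> pp (Yf (sig r t)) = sig r t.
Proof. intros H. pose proof (sig_dom r t H). unfold Dom in H0. apply Y_spec. lra. Qed.

Lemma g_deriv r t : Rabs r < RR ->
  is_derive (fun t => r * sin t / Yf (sig r t)) t (r * cos t * Phi (sig r t)).
Proof.
  intros Hr. pose proof (sig_dom r t Hr) as HD.
  pose proof (Y_pos (sig r t)) as HY. unfold Dom in HD.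
  unfold sig. auto_derive.
  - split. apply Yf_ex_derive. apply HD. split; auto. pose proof (HY ltac:(lra)). unfold sig in H. lra.
  - rewrite Derive_Yf by exact HD. fold (sig r t).
    assert (E1 := pp_Yf_sig r t Hr). pose proof (AA_Yf_pos _ HD) as HA.
    assert (HY' : 0 < Yf (sig r t)) by (apply HY; lra).
    unfold sig in E1 at 2. rewrite dpp_eq. unfold Phi, pp in *.
    set (Y := Yf (sig r t)) in *. set (x := r * sin t) in *. fold N.
    set (q := Y ^ pred n) in *. set (xm := x ^ pred n) in *.
    assert (Hq : 0 < q) by (apply pow_lt; lra).
    rewrite (pow_pred_S Y) in E1. rewrite (pow_pred_S x) in E1. fold q xm in E1.
    transitivity (r * cos t / Y - (kap * (x * xm)) * (r * cos t * N * (1 / (- q * AA Y))) / (Y * Y)).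
    field. repeat split; lra.
    rewrite <- E1. unfold AA in *. field. repeat split; lra.
Qed.

Definition gg r t := r * sin t / Yf (sig r t).

Lemma Yf_sig_pos r t : Rabs r < RR -> 0 < Yf (sig r t).
Proof. intros H. pose proof (sig_dom r t H). apply Y_pos. unfold Dom in H0; lra. Qed.

Lemma gg_pow r t : Rabs r < RR -> gg r t ^ n = (1 - Yf (sig r t) ^ 2) / kap.
Proof. intros H. pose proof (Yf_sig_pos r t H). pose proof (pp_Yf_sig r t H). pose proof kap_pos.
  unfold gg. unfold Rdiv at 1. rewrite Rpow_mult_distr, pow_inv.
  unfold sig at 2 in H1. unfold pp in H1.
  assert (0 < Yf (sig r t) ^ n) by (apply pow_lt; lra).
  set (Y := Yf (sig r t)) in *. set (x := r * sin t) in *.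
  replace (x ^ n) with (Y ^ n * (1 - Y ^ 2) / kap) by (rewrite H1; field; lra).
  field. lra. Qed.

Lemma W_gg r t : Rabs r < RR -> W n (gg r t) = (r * sin t) ^ 2 / 2.
Proof. intros H. unfold W. replace (n + 2)%nat with (n + 2)%nat by reflexivity.
  rewrite pow_add, gg_pow by auto. fold N. unfold gg, kap.
  pose proof (Yf_sig_pos r t H). pose proof N_pos.
  field. lra. Qed.

Lemma gg_abs r t : Rabs r < RR -> Rabs (gg r t) < Cn.
Proof. intros H. pose proof (Yf_sig_pos r t H). pose proof (abs_rsin r t H).
  pose proof (sig_dom r t H). apply Yf_gt in H2. pose proof ys_pos. pose proof Cn_pos.
  unfold gg. unfold Rdiv. rewrite Rabs_mult, Rabs_inv, (Rabs_pos_eq (Yf _)) by lra.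
  unfold RR in H1. apply (Rmult_lt_reg_r (Yf (sig r t))); [lra|].
  rewrite Rmult_assoc, Rinv_l by lra. nra. Qed.

Definition fk k h u := u ^ k * sqrt (2 * (h - W n u)).

Lemma oval_eq k h : oval_int n k h = 2 * RInt (fk k h) (- Cn) Cn.
Proof. unfold oval_int. f_equal. apply RInt_ext. intros x _. unfold oval_integrand, fk.
  destruct (Rlt_dec (W n x) h); auto. rewrite sqrt_neg_0 by lra. rewrite Rmult_0_r; reflexivity. Qed.

Lemma fk_cont k h u : continuous (fk k h) u.
Proof. unfold fk. apply (continuous_mult (fun u => u ^ k)).
  apply continuity_pt_filterlim, cont_pt_poly. intro; auto_derive; auto.
  apply continuous_sqrt_comp. apply continuity_pt_filterlim, cont_pt_poly. intro; unfold W; auto_derive; auto.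
Qed.

Definition dW u := u - u ^ (S n) / (N + 1).

Lemma W_deriv u : is_derive (W n) u (dW u).
Proof. unfold W, dW. pose proof N_pos. auto_derive; auto.
  replace (pred (n + 2)) with (S n) by lia. rewrite plus_INR. unfold N. simpl (INR 2).
  unfold N in H. field. lra. Qed.

Lemma W_mono_gen a b : a <= b -> (forall c, a < c < b -> 0 <= dW c) -> W n a <= W n b.
Proof. intros Hab H. destruct Hab as [Hab|Hab]; [|subst; lra].
  destruct (MVT_cor2 (W n) dW a b Hab) as [c [E Hc]].
  intros c _; apply is_derive_Reals, W_deriv. specialize (H c Hc). nra. Qed.

Lemma W_mono_gen' a b : a <= b -> (forall c, a < c < b -> dW c <= 0) -> W n b <= W n a.
Proof. intros Hab H. destruct Hab as [Hab|Hab]; [|subst; lra].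
  destruct (MVT_cor2 (W n) dW a b Hab) as [c [E Hc]].
  intros c _; apply is_derive_Reals, W_deriv. specialize (H c Hc). nra. Qed.

Lemma dW_fact c : Rabs c <= Cn -> 0 <= 1 - c ^ n / (N + 1).
Proof. intros H. pose proof N_pos.
  assert (c ^ n <= N + 1).
  { rewrite <- Cn_pow. apply Rle_trans with (Rabs (c ^ n)). apply Rle_abs.
    rewrite <- RPow_abs. apply pow_incr. split; auto. apply Rabs_pos. }
  assert (c ^ n / (N + 1) <= 1). { apply (Rmult_le_reg_r (N+1)); [lra|]. unfold Rdiv. rewrite Rmult_assoc, Rinv_l; lra. }
  lra. Qed.

Lemma dW_eq c : dW c = c * (1 - c ^ n / (N + 1)).
Proof. unfold dW. simpl. field. pose proof N_pos. lra. Qed.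

Lemma W_incr a b : 0 <= a -> a <= b -> b <= Cn -> W n a <= W n b.
Proof. intros. apply W_mono_gen; auto. intros c Hc. rewrite dW_eq.
  apply Rmult_le_pos. lra. apply dW_fact. rewrite Rabs_pos_eq; lra. Qed.

Lemma W_decr a b : - Cn <= a -> a <= b -> b <= 0 -> W n b <= W n a.
Proof. intros. apply W_mono_gen'; auto. intros c Hc. rewrite dW_eq.
  assert (0 <= 1 - c ^ n / (N + 1)) by (apply dW_fact; rewrite Rabs_left by lra; lra). nra. Qed.

Lemma RInt_zero (f : R -> R) a b : (forall x, Rmin a b < x < Rmax a b -> f x = 0) -> RInt f a b = 0.
Proof. intros H. rewrite (RInt_ext f (fun _ => 0)) by auto. rewrite RInt_const. apply Rmult_0_r. Qed.

Lemma ex_fk k h a b : ex_RInt (fk k h) a b.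
Proof. apply (ex_RInt_continuous (V := R_CompleteNormedModule)). intros; apply fk_cont. Qed.

Lemma shrink k h um up : - Cn <= um -> um <= 0 -> 0 <= up -> up <= Cn ->
  W n um = h -> W n up = h -> RInt (fk k h) (- Cn) Cn = RInt (fk k h) um up.
Proof. intros H1 H2 H3 H4 E1 E2.
  rewrite <- (RInt_Chasles (fk k h) (- Cn) um Cn) by apply ex_fk.
  rewrite <- (RInt_Chasles (fk k h) um up Cn) by apply ex_fk.
  rewrite (RInt_zero _ (- Cn) um), (RInt_zero _ up Cn).
  change (0 + (RInt (fk k h) um up + 0) = RInt (fk k h) um up). ring.
  - intros x Hx. rewrite Rmin_left, Rmax_right in Hx by lra. unfold fk.
    rewrite sqrt_neg_0. apply Rmult_0_r. assert (h <= W n x) by (rewrite <- E2; apply W_incr; lra). lra.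
  - intros x Hx. rewrite Rmin_left, Rmax_right in Hx by lra. unfold fk.
    rewrite sqrt_neg_0. apply Rmult_0_r. assert (h <= W n x) by (rewrite <- E1; apply W_decr; lra). lra.
Qed.

Lemma r_facts h : 0 < h < d_n n -> 0 < sqrt (2 * h) /\ sqrt (2 * h) < RR /\ sqrt (2 * h) ^ 2 = 2 * h.
Proof. intros H. pose proof RR_pos. pose proof RR_sq.
  assert (E : sqrt (2 * h) ^ 2 = 2 * h) by (simpl; rewrite Rmult_1_r; apply sqrt_sqrt; lra).
  split; [apply sqrt_lt_R0; lra|]. split; auto.
  apply Rnot_le_lt. intro C. assert (RR ^ 2 <= sqrt (2 * h) ^ 2) by (apply pow_incr; lra). lra. Qed.

Lemma sig_cont_t r t : continuous (sig r) t.
Proof. apply continuity_pt_filterlim, cont_pt_poly. intro; unfold sig; auto_derive; auto. Qed.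

Lemma dg_cont r t : Rabs r < RR -> continuous (fun t => r * cos t * Phi (sig r t)) t.
Proof. intros H. apply (continuous_mult (fun t => r * cos t)).
  apply continuity_pt_filterlim, cont_pt_poly. intro; auto_derive; auto.
  apply (continuous_comp (sig r) Phi). apply sig_cont_t.
  apply continuity_pt_filterlim, Phi_cont, sig_dom, H. Qed.

Lemma subst k h r : 0 < r -> r < RR -> r ^ 2 = 2 * h ->
  RInt (fk k h) (- Cn) Cn =
  RInt (fun t => r * cos t * Phi (sig r t) * (gg r t ^ k * (r * cos t))) (- (PI / 2)) (PI / 2).
Proof.
  intros H0 H1 H2. assert (Hr : Rabs r < RR) by (rewrite Rabs_pos_eq; lra).
  pose proof PI2_RGT_0 as HPI.
  assert (Wg : forall t, W n (gg r t) = (r * sin t) ^ 2 / 2) by (intro; apply W_gg, Hr).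
  assert (Ag : forall t, - Cn < gg r t < Cn).
  { intro t. pose proof (gg_abs r t Hr) as K. apply Rabs_def2 in K. lra. }
  assert (Gp : 0 < gg r (PI / 2)).
  { unfold gg. rewrite sin_PI2. pose proof (Yf_sig_pos r (PI/2) Hr). apply Rdiv_lt_0_compat; lra. }
  assert (Gm : gg r (- (PI / 2)) < 0).
  { unfold gg. rewrite sin_neg, sin_PI2. pose proof (Yf_sig_pos r (-(PI/2)) Hr).
    assert (0 < / Yf (sig r (- (PI / 2)))) by (apply Rinv_0_lt_compat; lra).
    unfold Rdiv. nra. }
  rewrite (shrink k h (gg r (- (PI / 2))) (gg r (PI / 2))).
  2: specialize (Ag (- (PI/2))); lra. 2: lra. 2: lra. 2: specialize (Ag (PI/2)); lra.
  2: rewrite Wg, sin_neg, sin_PI2; lra. 2: rewrite Wg, sin_PI2; lra.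
  rewrite <- (RInt_comp (fk k h) (gg r) (fun t => r * cos t * Phi (sig r t))).
  - apply RInt_ext. intros x Hx. rewrite Rmin_left, Rmax_right in Hx by lra.
    change (scal ?a ?b) with (a * b). unfold fk. rewrite Wg.
    pose proof (cos_gt_0 x ltac:(lra) ltac:(lra)) as Hc.
    pose proof (sin2_cos2 x) as H4.
    replace (2 * (h - (r * sin x) ^ 2 / 2)) with ((r * cos x) ^ 2).
    rewrite sqrt_pow2 by (apply Rmult_le_pos; lra). reflexivity.
    unfold Rsqr in H4. simpl in *. nra.
  - intros x _. apply fk_cont.
  - intros x _. split. apply (g_deriv r x Hr). apply dg_cont, Hr.
Qed.

Definition Mt r := RInt (fun t => cos t ^ 2 * Yf (sig r t)) (- (PI / 2)) (PI / 2).
Definition It r := RInt (fun t => cos t ^ 2 * Phi (sig r t)) (- (PI / 2)) (PI / 2).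

Lemma Yf_cont' s : Dom s -> continuity_pt Yf s.
Proof. apply Yf_cont. Qed.

Lemma ex_F (F : R -> R) r a b : Rabs r < RR -> (forall s, Dom s -> continuity_pt F s) ->
  ex_RInt (fun t => cos t ^ 2 * F (sig r t)) a b.
Proof. intros Hr HF. apply (ex_RInt_continuous (V := R_CompleteNormedModule)). intros z _.
  apply (cont2_1 (fun u v => cos v ^ 2 * F (sig u v))). apply cont2_F; auto. Qed.

Lemma RInt_lin (f g : R -> R) a b c : ex_RInt f a b -> ex_RInt g a b ->
  RInt (fun x => c * (f x - g x)) a b = c * (RInt f a b - RInt g a b).
Proof. intros Hf Hg. apply is_RInt_unique.
  apply (is_RInt_scal (fun x => f x - g x) a b c).
  apply (is_RInt_minus f g a b); apply (RInt_correct (V := R_CompleteNormedModule)); auto. Qed.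

Lemma B0_eq h r : 0 < r -> r < RR -> r ^ 2 = 2 * h -> B0 n h = 2 * (r ^ 2 * It r).
Proof. intros H0 H1 H2. assert (Hr : Rabs r < RR) by (rewrite Rabs_pos_eq; lra).
  unfold B0. rewrite oval_eq, (subst 0 h r H0 H1 H2). f_equal. unfold It.
  pose proof (RInt_scal (V := R_CompleteNormedModule) (fun t => cos t ^ 2 * Phi (sig r t)) (- (PI / 2)) (PI / 2) (r ^ 2)
     ltac:(apply ex_F; auto; apply Phi_cont)) as E.
  etransitivity; [|exact E]. apply RInt_ext.
  intros x _. change (scal ?a ?b) with (a * b). simpl. ring. Qed.

Lemma ggn_id r t : Rabs r < RR ->
  r * cos t * Phi (sig r t) * (gg r t ^ n * (r * cos t)) =
  (N + 1) * r ^ 2 * (cos t ^ 2 * Phi (sig r t) - cos t ^ 2 * Yf (sig r t)).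
Proof. intros Hr. rewrite gg_pow by auto. pose proof (sig_dom r t Hr) as HD.
  pose proof (AA_Yf_pos _ HD). unfold Phi, kap, AA in *. pose proof N_pos.
  field. lra. Qed.

Lemma B_eq h r : 0 < r -> r < RR -> r ^ 2 = 2 * h -> B n h = 2 * ((N + 1) * r ^ 2 * (It r - Mt r)).
Proof. intros H0 H1 H2. assert (Hr : Rabs r < RR) by (rewrite Rabs_pos_eq; lra).
  unfold B. rewrite oval_eq, (subst n h r H0 H1 H2). f_equal. unfold It, Mt.
  assert (X1 := ex_F Phi r (- (PI / 2)) (PI / 2) Hr Phi_cont).
  assert (X2 := ex_F Yf r (- (PI / 2)) (PI / 2) Hr Yf_cont).
  rewrite <- RInt_lin by auto. apply RInt_ext.
  intros x _. rewrite ggn_id by auto. reflexivity.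
Qed.

Lemma RInt_pos_gen (F : R -> R) r : Rabs r < RR -> (forall s, Dom s -> continuity_pt F s) ->
  (forall s, Dom s -> 0 < F s) -> 0 < RInt (fun t => cos t ^ 2 * F (sig r t)) (- (PI / 2)) (PI / 2).
Proof. intros Hr HFc HF. pose proof PI2_RGT_0.
  assert (E : RInt (fun _ => 0) (- (PI / 2)) (PI / 2) = 0) by (apply RInt_zero; auto).
  rewrite <- E. apply RInt_lt. lra.
  - intros x _. apply (cont2_1 (fun u v => cos v ^ 2 * F (sig u v))). apply cont2_F; auto.
  - intros x _. apply continuous_const.
  - intros x Hx. pose proof (cos_gt_0 x ltac:(lra) ltac:(lra)).
    pose proof (HF _ (sig_dom r x Hr)). apply Rmult_lt_0_compat; auto. apply pow_lt; lra.
Qed.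

Lemma Phi_pos s : Dom s -> 0 < Phi s.
Proof. intros H. unfold Phi. pose proof (AA_Yf_pos s H). pose proof (Yf_gt s H). pose proof ys_pos.
  apply Rdiv_lt_0_compat; lra. Qed.

Lemma It_pos r : Rabs r < RR -> 0 < It r.
Proof. intros. apply RInt_pos_gen; auto. apply Phi_cont. apply Phi_pos. Qed.

Lemma Mt_pos r : Rabs r < RR -> 0 < Mt r.
Proof. intros. apply RInt_pos_gen; auto. apply Yf_cont.
  intros s Hs. pose proof (Yf_gt s Hs). pose proof ys_pos. lra. Qed.

Lemma RInt_sym (F : R -> R) a : 0 < a -> (forall x, - a <= x <= a -> continuous F x) ->
  RInt F (- a) a = RInt (fun t => F t + F (- t)) 0 a.
Proof.
  intros Ha HF.
  assert (X1 : ex_RInt F (- a) 0) by (apply (ex_RInt_continuous (V := R_CompleteNormedModule));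
    intros z Hz; apply HF; rewrite Rmin_left, Rmax_right in Hz by lra; lra).
  assert (X2 : ex_RInt F 0 a) by (apply (ex_RInt_continuous (V := R_CompleteNormedModule));
    intros z Hz; apply HF; rewrite Rmin_left, Rmax_right in Hz by lra; lra).
  rewrite <- (RInt_Chasles F (- a) 0 a X1 X2).
  symmetry. apply is_RInt_unique.
  change (plus (RInt F (- a) 0) (RInt F 0 a)) with (RInt F (- a) 0 + RInt F 0 a).
  rewrite Rplus_comm.
  apply (is_RInt_plus (V := R_NormedModule) F (fun t => F (- t))).
  apply (RInt_correct (V := R_CompleteNormedModule)); auto.
  set (I := RInt F (- a) 0).
  assert (K1 : is_RInt F (- a) 0 I) by (apply (RInt_correct (V := R_CompleteNormedModule)); auto).
  assert (K2 : is_RInt F (- 0) (- a) (opp I)).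
  { rewrite Ropp_0. apply (is_RInt_swap (V := R_NormedModule)); auto. }
  assert (K3 : is_RInt (fun x => opp (F x)) (- 0) (- a) (opp (opp I))).
  { apply (is_RInt_opp (V := R_NormedModule)); auto. }
  apply (is_RInt_comp_opp (V := R_NormedModule)) in K3.
  rewrite opp_opp in K3.
  apply (is_RInt_ext (V := R_NormedModule)) with (2 := K3).
  intros x _. apply opp_opp.
Qed.

Lemma negpow x k : (- x) ^ k = (-1) ^ k * x ^ k.
Proof. replace (- x) with ((-1) * x) by ring. apply Rpow_mult_distr. Qed.

Definition DD (G : R -> R) r t := cos t ^ 2 * (G (sig r t) * dsig r t).

Lemma sym_pt (G : R -> R) r t : 0 < r -> 0 < t < PI / 2 ->
  let x := r * sin t in
  let K := cos t ^ 2 * kap * N * sin t * x ^ (pred n) in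
  0 < K /\
  ((DD G r t + DD G r (- t) = K * (G (kap * x ^ n) - G (- (kap * x ^ n)))) \/
   (DD G r t + DD G r (- t) = K * (2 * G (kap * x ^ n)))).
Proof.
  intros Hr Ht x K. pose proof PI2_Rlt_PI.
  assert (Hs : 0 < sin t) by (apply sin_gt_0; lra).
  assert (Hc : 0 < cos t) by (apply cos_gt_0; lra).
  assert (Hx : 0 < x) by (unfold x; nra).
  split. { unfold K. pose proof kap_pos. pose proof N_pos.
    assert (0 < x ^ pred n) by (apply pow_lt; lra). assert (0 < cos t ^ 2) by (apply pow_lt; lra).
    apply Rmult_lt_0_compat; [|auto]. apply Rmult_lt_0_compat; [|auto].
    apply Rmult_lt_0_compat; [|auto]. apply Rmult_lt_0_compat; auto. }
  unfold DD, sig, dsig. rewrite cos_neg, sin_neg.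
  replace (r * - sin t) with (- x) by (unfold x; ring). fold x.
  rewrite !(negpow x).
  destruct (Nat.Even_or_Odd n) as [[m Hm]|[m Hm]].
  - right. assert (E1 : (-1) ^ n = 1) by (rewrite Hm; apply pow_1_even).
    assert (E2 : (-1) ^ pred n = -1) by (replace (pred n) with (S (2 * (m - 1))) by lia; apply pow_1_odd).
    rewrite E1, E2, !Rmult_1_l. unfold K. ring.
  - left. assert (E1 : (-1) ^ n = -1) by (replace n with (S (2 * m)) by lia; apply pow_1_odd).
    assert (E2 : (-1) ^ pred n = 1) by (replace (pred n) with (2 * m)%nat by lia; apply pow_1_even).
    rewrite E1, E2, !Rmult_1_l. unfold K. replace (-1 * x ^ n) with (- x ^ n) by ring.
    replace (kap * - x ^ n) with (- (kap * x ^ n)) by ring. ring.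
Qed.

Lemma Yd_form s : Dom s -> Yd s = - (1 / (Yf s ^ pred n * AA (Yf s))).
Proof. intros H. unfold Yd. rewrite dpp_eq. pose proof (AA_Yf_pos s H). pose proof (Yf_gt s H).
  pose proof ys_pos. assert (0 < Yf s ^ pred n) by (apply pow_lt; lra). field. lra. Qed.

Lemma Phid_form s : Dom s -> Phid s = 2 * (1 / (Yf s ^ pred n * AA (Yf s) ^ 2)) + 4 * N * (1 / (Yf s ^ pred n * AA (Yf s) ^ 3)).
Proof. intros H. unfold Phid. rewrite Yd_form by auto. unfold dPhiY. pose proof (AA_Yf_pos s H). pose proof (Yf_gt s H).
  pose proof ys_pos. assert (0 < Yf s ^ pred n) by (apply pow_lt; lra).
  unfold AA in *. field. split; lra. Qed.

Lemma frac_cmp q1 q2 a1 a2 : 0 < q1 <= q2 -> 0 < a1 < a2 -> 1 / (q2 * a2) < 1 / (q1 * a1).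
Proof. intros [H1 H2] [H3 H4]. unfold Rdiv. rewrite !Rmult_1_l.
  assert (q1 * a1 <= q2 * a1) by (apply Rmult_le_compat_r; lra).
  assert (q2 * a1 < q2 * a2) by (apply Rmult_lt_compat_l; lra).
  assert (0 < q1 * a1) by (apply Rmult_lt_0_compat; lra).
  apply Rinv_lt_contravar. apply Rmult_lt_0_compat; lra. lra. Qed.

Lemma Yd_neg s : Dom s -> Yd s < 0.
Proof. intros H. rewrite Yd_form by auto. pose proof (AA_Yf_pos s H). pose proof (Yf_gt s H).
  pose proof ys_pos. assert (0 < Yf s ^ pred n) by (apply pow_lt; lra).
  assert (0 < 1 / (Yf s ^ pred n * AA (Yf s))) by (apply Rdiv_lt_0_compat; nra). lra. Qed.

Lemma Phid_pos s : Dom s -> 0 < Phid s.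
Proof. intros H. rewrite Phid_form by auto. pose proof (AA_Yf_pos s H). pose proof (Yf_gt s H).
  pose proof ys_pos. pose proof N_pos. assert (0 < Yf s ^ pred n) by (apply pow_lt; lra).
  assert (0 < AA (Yf s) ^ 2) by (apply pow_lt; lra). assert (0 < AA (Yf s) ^ 3) by (apply pow_lt; lra).
  assert (0 < 1 / (Yf s ^ pred n * AA (Yf s) ^ 2)) by (apply Rdiv_lt_0_compat; nra).
  assert (0 < 1 / (Yf s ^ pred n * AA (Yf s) ^ 3)) by (apply Rdiv_lt_0_compat; nra). nra. Qed.

Lemma yz_facts s : 0 < s < ss ->
  let y := Yf s in let z := Yf (- s) in
  0 < y ^ pred n <= z ^ pred n /\ 0 < AA y < AA z.
Proof. intros Hs y z. pose proof ss_pos. pose proof pp2.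
  assert (Dy : Dom s) by (unfold Dom; lra). assert (Dz : Dom (- s)) by (unfold Dom; lra).
  pose proof (Y_lt1 s ltac:(lra)). pose proof (Y_gt1 (- s) ltac:(lra)). pose proof (Yf_gt s Dy).
  pose proof ys_pos. fold y z in H1, H2, H3.
  split. split. apply pow_lt; lra. apply pow_incr; lra.
  split. apply AA_pos; lra. unfold AA. pose proof N_pos.
  assert (y ^ 2 < z ^ 2) by (simpl; nra).
  apply Rplus_lt_compat_r. apply Rmult_lt_compat_l; lra. Qed.

Lemma Yd_cmp s : 0 < s < ss -> Yd s < Yd (- s).
Proof. intros Hs. pose proof ss_pos. pose proof pp2.
  rewrite !Yd_form by (unfold Dom; lra). destruct (yz_facts s Hs) as [H1 H2].
  pose proof (frac_cmp _ _ _ _ H1 H2). lra. Qed.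

Lemma Phid_cmp s : 0 < s < ss -> Phid (- s) < Phid s.
Proof. intros Hs. pose proof ss_pos. pose proof pp2. pose proof N_pos.
  rewrite !Phid_form by (unfold Dom; lra). destruct (yz_facts s Hs) as [H2 [H3 H4]].
  assert (A2 : 0 < AA (Yf s) ^ 2 < AA (Yf (- s)) ^ 2) by (split; [apply pow_lt; lra | simpl; nra]).
  assert (A3 : 0 < AA (Yf s) ^ 3 < AA (Yf (- s)) ^ 3).
  { split. apply pow_lt; lra. simpl. destruct A2 as [_ A2]. simpl in A2. nra. }
  pose proof (frac_cmp _ _ _ _ H2 A2). pose proof (frac_cmp _ _ _ _ H2 A3). nra. Qed.

Lemma DD_cont G r t : Rabs r < RR -> (forall s, Dom s -> continuity_pt G s) -> continuous (DD G r) t.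
Proof. intros Hr HG. apply (cont2_1 (fun u v => cos v ^ 2 * (G (sig u v) * dsig u v))). apply cont2_dF; auto. Qed.

Lemma sigma_range r t : 0 < r < RR -> 0 < t < PI / 2 -> 0 < kap * (r * sin t) ^ n < ss.
Proof. intros Hr Ht. pose proof PI2_Rlt_PI.
  assert (Hs : 0 < sin t) by (apply sin_gt_0; lra).
  assert (Hx : 0 < r * sin t) by nra.
  assert (Rabs r < RR) by (rewrite Rabs_pos_eq; lra).
  pose proof (dom _ (abs_rsin r t H0)). split; [|lra].
  apply Rmult_lt_0_compat. apply kap_pos. apply pow_lt; lra. Qed.

Lemma sym_RInt_sign G r (sgn : R) : 0 < r < RR -> (sgn = 1 \/ sgn = -1) ->
  (forall s, Dom s -> continuity_pt G s) ->
  (forall s, 0 < s < ss -> 0 < sgn * (G s - G (- s))) ->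
  (forall s, 0 < s < ss -> 0 < sgn * G s) ->
  0 < sgn * RInt (DD G r) (- (PI / 2)) (PI / 2).
Proof.
  intros Hr Hsg HG H1 H2. pose proof PI2_RGT_0.
  assert (Hr' : Rabs r < RR) by (rewrite Rabs_pos_eq; lra).
  rewrite RInt_sym by (auto; intros; apply DD_cont; auto).
  assert (E : RInt (fun _ => 0) 0 (PI / 2) = 0) by (apply RInt_zero; auto).
  assert (C : forall x, continuous (fun t => DD G r t + DD G r (- t)) x).
  { intro x. apply (continuous_plus (DD G r)). apply DD_cont; auto.
    apply (continuous_comp (fun t => - t) (DD G r)). apply continuity_pt_filterlim, cont_pt_poly; intro; auto_derive; auto. apply DD_cont; auto. }
  destruct Hsg as [Hsg|Hsg]; subst sgn; rewrite ?Rmult_1_l.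
  - apply Rle_lt_trans with (RInt (fun _ => 0) 0 (PI / 2)); [rewrite E; lra|].
    apply RInt_lt. lra. intros; auto. intros; apply continuous_const.
    intros x Hx. destruct (sym_pt G r x ltac:(lra) Hx) as [K [E1|E1]]; rewrite E1.
    + specialize (H1 _ (sigma_range r x Hr Hx)). nra.
    + specialize (H2 _ (sigma_range r x Hr Hx)). nra.
  - cut (RInt (fun t => DD G r t + DD G r (- t)) 0 (PI / 2) < 0). lra.
    apply Rlt_le_trans with (RInt (fun _ => 0) 0 (PI / 2)); [|rewrite E; lra].
    apply RInt_lt. lra. intros; apply continuous_const. intros; auto.
    intros x Hx. destruct (sym_pt G r x ltac:(lra) Hx) as [K [E1|E1]]; rewrite E1.
    + specialize (H1 _ (sigma_range r x Hr Hx)). nra.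
    + specialize (H2 _ (sigma_range r x Hr Hx)). nra.
Qed.

Lemma dMt_neg r : 0 < r < RR -> RInt (DD Yd r) (- (PI / 2)) (PI / 2) < 0.
Proof. intros Hr. pose proof ss_pos. pose proof pp2.
  cut (0 < -1 * RInt (DD Yd r) (- (PI / 2)) (PI / 2)). lra.
  apply sym_RInt_sign; auto. apply Yd_cont.
  intros s Hs. pose proof (Yd_cmp s Hs). lra.
  intros s Hs. assert (Dom s) by (unfold Dom; lra). pose proof (Yd_neg s H1). lra. Qed.

Lemma dIt_pos r : 0 < r < RR -> 0 < RInt (DD Phid r) (- (PI / 2)) (PI / 2).
Proof. intros Hr. pose proof ss_pos. pose proof pp2.
  rewrite <- (Rmult_1_l (RInt _ _ _)).
  apply sym_RInt_sign; auto. apply Phid_cont.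
  intros s Hs. pose proof (Phid_cmp s Hs). lra.
  intros s Hs. assert (Dom s) by (unfold Dom; lra). pose proof (Phid_pos s H1). lra. Qed.

Lemma Mt_deriv r : Rabs r < RR -> is_derive Mt r (RInt (DD Yd r) (- (PI / 2)) (PI / 2)).
Proof. intros Hr. unfold Mt, DD. apply (param_deriv Yf Yd); auto.
  intros s Hs. apply Y_deriv, Hs. apply Yd_cont. Qed.

Lemma It_deriv r : Rabs r < RR -> is_derive It r (RInt (DD Phid r) (- (PI / 2)) (PI / 2)).
Proof. intros Hr. unfold It, DD. apply (param_deriv Phi Phid); auto.
  apply Phi_deriv. apply Phid_cont. Qed.

Definition Q r := (N + 1) * (It r - Mt r) / It r.

Lemma Q_deriv r : Rabs r < RR ->
  is_derive Q r ((N + 1) * (Mt r * RInt (DD Phid r) (- (PI / 2)) (PI / 2) - It r * RInt (DD Yd r) (- (PI / 2)) (PI / 2)) / (It r) ^ 2).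
Proof. intros Hr. pose proof (It_pos r Hr). pose proof (Mt_deriv r Hr). pose proof (It_deriv r Hr).
  unfold Q. auto_derive.
  - repeat split; try (eexists; eauto). lra.
  - replace (Derive (fun x => It x) r) with (RInt (DD Phid r) (- (PI / 2)) (PI / 2)) by (symmetry; apply is_derive_unique; auto).
    replace (Derive (fun x => Mt x) r) with (RInt (DD Yd r) (- (PI / 2)) (PI / 2)) by (symmetry; apply is_derive_unique; auto).
    field. lra. Qed.

Lemma Btilde_Q h : 0 < h < d_n n -> Btilde n h = Q (sqrt (2 * h)).
Proof. intros H. destruct (r_facts h H) as [H0 [H1 H2]].
  unfold Btilde. rewrite (B_eq h _ H0 H1 H2), (B0_eq h _ H0 H1 H2).
  assert (Hr : Rabs (sqrt (2 * h)) < RR) by (rewrite Rabs_pos_eq; lra).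
  pose proof (It_pos _ Hr). unfold Q. field. split; lra. Qed.

Lemma Btilde_deriv h : 0 < h < d_n n -> exists L, 0 < L /\ is_derive (Btilde n) h L.
Proof. intros H. destruct (r_facts h H) as [H0 [H1 H2]].
  set (r := sqrt (2 * h)) in *.
  assert (Hr : Rabs r < RR) by (rewrite Rabs_pos_eq; lra).
  pose proof (Q_deriv r Hr) as HQ.
  pose proof (It_pos r Hr). pose proof (Mt_pos r Hr).
  pose proof (dMt_neg r ltac:(lra)). pose proof (dIt_pos r ltac:(lra)).
  pose proof N_pos.
  set (dQ := (N + 1) * (Mt r * RInt (DD Phid r) (- (PI / 2)) (PI / 2) - It r * RInt (DD Yd r) (- (PI / 2)) (PI / 2)) / (It r) ^ 2) in *.
  assert (HdQ : 0 < dQ).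
  { unfold dQ. apply Rdiv_lt_0_compat. apply Rmult_lt_0_compat. lra.
    assert (0 < Mt r * RInt (DD Phid r) (- (PI / 2)) (PI / 2)) by (apply Rmult_lt_0_compat; auto).
    assert (It r * RInt (DD Yd r) (- (PI / 2)) (PI / 2) < 0) by (apply Rmult_pos_neg; auto; lra). lra.
    apply pow_lt; lra. }
  exists (/ r * dQ). split. apply Rmult_lt_0_compat; auto. apply Rinv_0_lt_compat; lra.
  apply (is_derive_ext_loc (fun h => Q (sqrt (2 * h)))).
  - assert (He : 0 < Rmin h (d_n n - h)) by (apply Rmin_glb_lt; lra).
    exists (mkposreal _ He). intros y Hy. symmetry. apply Btilde_Q.
    change (Rabs (y - h) < Rmin h (d_n n - h)) in Hy.
    pose proof (Rmin_l h (d_n n - h)). pose proof (Rmin_r h (d_n n - h)).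
    apply Rabs_def2 in Hy. lra.
  - apply (is_derive_comp Q (fun h => sqrt (2 * h))). exact HQ.
    auto_derive. lra. fold r. field. lra.
Qed.

Lemma Q0 : Q 0 = 0.
Proof. unfold Q.
  assert (E : Mt 0 = It 0).
  { unfold Mt, It. apply RInt_ext. intros x _. unfold sig.
    rewrite Rmult_0_l, pow_i by lia. rewrite Rmult_0_r. unfold Phi. rewrite Y0. unfold AA.
    change (cos x ^ 2 * 1 = cos x ^ 2 * (2 * 1 / ((N + 2) * 1 ^ 2 - N))). field. pose proof N_pos; lra. }
  rewrite E. unfold Rminus. rewrite Rplus_opp_r. unfold Rdiv. ring. Qed.

Lemma Q_cont0 : filterlim Q (locally 0) (locally 0).
Proof. rewrite <- Q0 at 2. apply (ex_derive_continuous Q). eexists. apply Q_deriv.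
  rewrite Rabs_R0. apply RR_pos. Qed.

Lemma main :
  (forall h1 h2, 0 < h1 -> h1 < h2 -> h2 < d_n n ->
     Btilde n h1 < Btilde n h2) /\
  (forall h, 0 < h < d_n n ->
     ex_derive (Btilde n) h /\ 0 < Derive (Btilde n) h) /\
  filterlim (Btilde n) (at_right 0) (locally 0).
Proof.
  assert (D : forall h, 0 < h < d_n n -> ex_derive (Btilde n) h /\ 0 < Derive (Btilde n) h).
  { intros h H. destruct (Btilde_deriv h H) as [L [HL HD]]. split. eexists; eauto.
    rewrite (is_derive_unique _ _ _ HD). auto. }
  split; [|split; auto].
  - intros h1 h2 H1 H12 H2.
    destruct (MVT_gen (Btilde n) h1 h2 (Derive (Btilde n))) as [c [Hc E]].
    + intros x Hx. rewrite Rmin_left, Rmax_right in Hx by lra. apply Derive_correct. apply D. lra.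
    + intros x Hx. rewrite Rmin_left, Rmax_right in Hx by lra. apply continuity_pt_filterlim.
      apply (ex_derive_continuous (Btilde n)). apply D. lra.
    + rewrite Rmin_left, Rmax_right in Hc by lra. destruct (D c ltac:(lra)) as [_ Hp]. nra.
  - apply (filterlim_ext_loc (F := at_right 0) (fun h => Q (sqrt (2 * h)))).
    + pose proof RR_pos. pose proof RR_sq.
      assert (Hd : 0 < d_n n) by nra.
      exists (mkposreal _ Hd). intros y Hy Hy0. symmetry. apply Btilde_Q.
      change (Rabs (y - 0) < d_n n) in Hy. rewrite Rminus_0_r in Hy. apply Rabs_def2 in Hy. lra.
    + apply (filterlim_comp _ _ _ (fun h => sqrt (2 * h)) Q _ (locally 0)); [|apply Q_cont0].
      apply (filterlim_filter_le_1 (F := locally 0) _ (filter_le_within (F := locally 0) _)).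
      assert (K : continuity_pt (fun h => sqrt (2 * h)) 0).
      { apply (continuity_pt_comp (fun h => 2 * h) sqrt).
        apply cont_pt_poly. intro; auto_derive; auto.
        apply continuity_pt_sqrt. lra. }
      apply continuity_pt_filterlim in K. rewrite Rmult_0_r, sqrt_0 in K. exact K.
Qed.
End S.

Theorem proposition1 (n : nat) (Hn : (0 < n)%nat) :
  (forall h1 h2, 0 < h1 -> h1 < h2 -> h2 < d_n n ->
     Btilde n h1 < Btilde n h2) /\
  (forall h, 0 < h < d_n n ->
     ex_derive (Btilde n) h /\ 0 < Derive (Btilde n) h) /\
  filterlim (Btilde n) (at_right 0) (locally 0).
Proof. exact (main n Hn). Qed.
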